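(* Let $j\ge 0$ be an integer and let $g_0^{j+1},\dots,g_j^{j+1}$ be real numbers with $$g_j^{j+1}>g_{j-1}^{j+1}>\dots>g_0^{j+1}>0,$$ and set $g_{-1}^{j+1}:=0$ (this convention is only needed when $j=0$). For any real numbers $v^0,v^1,\dots,v^{j+1}$ define $${}_g\Delta v:=\sum_{s=0}^{j}\big(v^{s+1}-v^s\big)g_s^{j+1},\qquad {}_g\Delta (v^2):=\sum_{s=0}^{j}\big((v^{s+1})^2-(v^s)^2\big)g_s^{j+1}.$$ Then $$v^{j+1}\,{}_g\Delta v\;\ge\;\tfrac12\,{}_g\Delta(v^2)+\frac{1}{2g_j^{j+1}}\big({}_g\Delta v\big)^2,$$ $$v^{j}\,{}_g\Delta v\;\ge\;\tfrac12\,{}_g\Delta(v^2)-\frac{1}{2\big(g_j^{j+1}-g_{j-1}^{j+1}\big)}\big({}_g\Delta v\big)^2.$$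
   Context: The paper states this for every $j=0,1,\dots,M-1$ and for functions $v$ defined on a time mesh $0=t_0<t_1<\dots<t_M=T$, with $v^s=v(t_s)$; the expression ${}_g\Delta v$ is a discrete analog of the Caputo fractional derivative at time level $j+1$. *)

(* Defs.v *)
From mathcomp Require Import all_boot all_order all_algebra.
Set Implicit Arguments. Unset Strict Implicit. Unset Printing Implicit Defensive.
Import Order.TTheory GRing.Theory Num.Theory.
Local Open Scope ring_scope.

Definition gDelta {R : pzRingType} (j : nat) (g v : nat -> R) : R :=
  \sum_(0 <= s < j.+1) (v s.+1 - v s) * g s.

Definition gDelta_sq {R : pzRingType} (j : nat) (g v : nat -> R) : R :=
  \sum_(0 <= s < j.+1) (v s.+1 ^+ 2 - v s ^+ 2) * g s.

Definition g_prev {R : pzRingType} (j : nat) (g : nat -> R) : R :=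
  if j is j'.+1 then g j' else 0.

(* Main.v *)
Require Import Defs.
From mathcomp Require Import all_boot all_order all_algebra.
From mathcomp Require Import ring lra.
Import Order.TTheory GRing.Theory Num.Theory.
Local Open Scope ring_scope.

Section Aux.
Variable R : realFieldType.

Lemma tel (g : nat -> R) n :
  \sum_(0 <= m < n) (g m - g_prev m g) = g_prev n g.
Proof.
elim: n => [|n IH]; first by rewrite big_nil.
rewrite big_nat_recr //= IH; case: n {IH} => [|n] /=; ring.
Qed.

Lemma abel (g f : nat -> R) n :
  \sum_(0 <= s < n) (f s - f s.+1) * g s =
  \sum_(0 <= m < n) (g m - g_prev m g) * (f m - f n).
Proof.
elim: n => [|n IH]; first by rewrite !big_nil.
rewrite !big_nat_recr //= IH.
have -> : \sum_(0 <= m < n) (g m - g_prev m g) * (f m - f n.+1) =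
  \sum_(0 <= m < n) (g m - g_prev m g) * (f m - f n) +
  (f n - f n.+1) * \sum_(0 <= m < n) (g m - g_prev m g).
  rewrite mulr_sumr -big_split /=; apply: eq_bigr => i _; ring.
rewrite tel; ring.
Qed.

Lemma w_ge0 (g : nat -> R) j (hg0 : 0 < g 0%N)
  (hginc : forall s : nat, (s < j)%N -> g s < g s.+1) m :
  (m <= j)%N -> 0 < g m - g_prev m g.
Proof.
case: m => [|m] /= hm; first by rewrite subr0.
by rewrite subr_gt0; apply: hginc.
Qed.

Lemma gj_pos (g : nat -> R) j (hg0 : 0 < g 0%N)
  (hginc : forall s : nat, (s < j)%N -> g s < g s.+1) : 0 < g j.
Proof.
elim: j hginc => [|j IH] h //.
apply: lt_trans (h j (ltnSn j)); apply: IH => s hs; apply: h; exact: ltnW.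
Qed.

End Aux.

Theorem lemma1 (R : realFieldType) (j : nat) (g v : nat -> R)
  (hg0 : 0 < g 0%N)
  (hginc : forall s : nat, (s < j)%N -> g s < g s.+1) :
  v j.+1 * gDelta j g v >= gDelta_sq j g v / 2 + (gDelta j g v) ^+ 2 / (2 * g j)
  /\
  v j * gDelta j g v >= gDelta_sq j g v / 2 - (gDelta j g v) ^+ 2 / (2 * (g j - g_prev j g)).
Proof.
pose w m := g m - g_prev m g.
pose e m := v j.+1 - v m.
pose X := \sum_(0 <= m < j.+1) w m * e m.
pose Y := \sum_(0 <= m < j.+1) w m * e m ^+ 2.
have hX : gDelta j g v = X.
  rewrite /gDelta /X.
  transitivity (\sum_(0 <= s < j.+1) ((fun s => - v s) s - (fun s => - v s) s.+1) * g s).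
    by apply: eq_bigr => i _ /=; ring.
  rewrite (@abel R g (fun s => - v s)); apply: eq_bigr => i _; rewrite /w /e /=; ring.
have hY : v j.+1 * gDelta j g v - gDelta_sq j g v / 2 = Y / 2.
  rewrite /gDelta /gDelta_sq /Y.
  transitivity (\sum_(0 <= s < j.+1) ((fun s => (v j.+1 - v s) ^+ 2 / 2) s - (fun s => (v j.+1 - v s) ^+ 2 / 2) s.+1) * g s).
    rewrite mulr_sumr mulr_suml -sumrB; apply: eq_bigr => k _ /=; by field.
  etransitivity; first exact: (@abel R g (fun s => (v j.+1 - v s) ^+ 2 / 2) j.+1).
  rewrite mulr_suml; apply: eq_bigr => k _; rewrite /w /e /=; by field.
have hG : \sum_(0 <= m < j.+1) w m = g j by rewrite tel.
have wpos : forall m, (m < j.+1)%N -> 0 < w m.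
  by move=> m hm; apply: (@w_ge0 R g j hg0 hginc).
have gjp := @gj_pos R g j hg0 hginc.
rewrite hX; rewrite hX in hY.
split.
-
  pose t := X / g j.
  have h0 : 0 <= \sum_(0 <= m < j.+1) w m * (e m - t) ^+ 2.
    rewrite big_seq_cond; apply: sumr_ge0 => i; rewrite andbT mem_iota add0n => /andP[_ hi].
    by apply: mulr_ge0; [exact: ltW (wpos _ hi)|exact: sqr_ge0].
  have hexp : \sum_(0 <= m < j.+1) w m * (e m - t) ^+ 2 = Y - 2 * t * X + t ^+ 2 * g j.
    rewrite -hG /Y /X mulr_sumr mulr_sumr -sumrB -big_split /=.
    by apply: eq_bigr => i _; ring.
  rewrite hexp /t in h0.
  have gjn : g j != 0 by rewrite gt_eqF.
  have : 0 <= Y - X ^+ 2 / g j.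
    by move: h0; congr (0 <= _); field.
  move=> hYX.
  have : gDelta_sq j g v / 2 + X ^+ 2 / (2 * g j) = v j.+1 * X - (Y - X ^+ 2 / g j) / 2.
    by move: hY => /eqP; rewrite subr_eq => /eqP ->; field.
  move=> ->; rewrite lerBlDr lerDl; apply: divr_ge0 => //.
- have wjp : 0 < g j - g_prev j g by apply: wpos.
  have hY' : Y = \sum_(0 <= m < j) w m * e m ^+ 2 + w j * e j ^+ 2.
    by rewrite /Y big_nat_recr.
  have hY0 : 0 <= \sum_(0 <= m < j) w m * e m ^+ 2.
    rewrite big_seq_cond; apply: sumr_ge0 => i; rewrite andbT mem_iota add0n subn0 => /andP[_ hi].
    by apply: mulr_ge0; [exact: ltW (wpos _ (leqW hi))|exact: sqr_ge0].
  set Z := \sum_(0 <= m < j) w m * e m ^+ 2 in hY' hY0.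
  have wjn : g j - g_prev j g != 0 by rewrite gt_eqF.
  have key : v j * X - (gDelta_sq j g v / 2 - X ^+ 2 / (2 * (g j - g_prev j g)))
     = (Z + (X - w j * e j) ^+ 2 / w j) / 2.
    have hS : gDelta_sq j g v = 2 * (v j.+1 * X) - Y.
      by move: hY => /eqP; rewrite subr_eq => /eqP ->; field.
    rewrite hS hY' /e /w; by field.
  rewrite -subr_ge0 key; apply: divr_ge0 => //; apply: addr_ge0 => //.
  by apply: divr_ge0; [exact: sqr_ge0|exact: ltW].
Qed.
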